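(* Let $m\ge2$, let $K/F$ be a cyclic Galois field extension of degree $m$ with $\mathrm{Gal}(K/F)=\langle\sigma\rangle$, and suppose $F$ has no non-trivial $m$th root of unity. Let $A=(K/F,\sigma,d)$ be a nonassociative cyclic algebra of degree $m$ where $d\in K^\times$ is not contained in any proper subfield of $K$. Then every $F$-automorphism of $A$ restricts to the identity on $K$, and $\mathrm{Aut}_F(A)\cong\ker(N_{K/F})$. In particular, all automorphisms of $A$ are inner.
   Context: For $\sigma\in\mathrm{Aut}(K)$, $K[t;\sigma]$ is the twisted polynomial ring (polynomials $\sum a_it^i$, $a_i\in K$, with multiplication determined by $ta=\sigma(a)t$). For $d\in K^\times$, $(K/F,\sigma,d)$ is the $F$-vector space of polynomials of degree $<m$ in $K[t;\sigma]$ with multiplication $g\circ h=$ remainder of $gh$ on right division by $t^m-d$ (i.e. $gh=q(t^m-d)+r$ with $\deg r<m$); it is a unital nonassociative $F$-algebra containing $K$. An automorphism $G$ of a unital algebra $A$ is inner if there is $c\in A$ with a left inverse $c_l$ (i.e. $c_lc=1$) such that $G(x)=(c_lx)c$ for all $x\in A$. *)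

(* Defs.v *)
From HB Require Import structures.
From mathcomp Require Import all_boot all_order all_algebra all_fingroup all_field.
Set Implicit Arguments. Unset Strict Implicit. Unset Printing Implicit Defensive.
Import GRing.Theory.
Local Open Scope ring_scope.

(* K is the field L : splittingFieldType F; an element sum_{i<m} a_i t^i of A
   is represented by its coefficient function {ffun 'I_m -> L}.
   The multiplication "remainder of g h on right division by t^m - d" in
   K[t;sigma] unfolds to
     (a t^i)(b t^j) = a sigma^i(b) t^(i+j)                   if i+j < m,
     (a t^i)(b t^j) = a sigma^i(b) sigma^(i+j-m)(d) t^(i+j-m) if i+j >= m,
   since t^(m+k) = t^k (t^m - d) + sigma^k(d) t^k. *)
Section CycAlg.
Variables (F : fieldType) (L : splittingFieldType F) (m : nat).
Variables (sigma : gal_of {:L}) (d : L).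

Definition cycA := {ffun 'I_m -> L}.

Definition cyc_mul (g h : cycA) : cycA :=
  [ffun k : 'I_m =>
     \sum_(i < m) \sum_(j < m | (i + j == k)%N) g i * (sigma ^+ i)%g (h j)
   + \sum_(i < m) \sum_(j < m | (i + j == k + m)%N)
        g i * (sigma ^+ i)%g (h j) * (sigma ^+ k)%g d].

Definition cyc_one : cycA := [ffun k : 'I_m => if (k == 0 :> nat) then 1 else 0].

Definition cyc_emb (x : L) : cycA :=
  [ffun k : 'I_m => if (k == 0 :> nat) then x else 0].

Definition is_FAut (G : cycA -> cycA) : Prop :=
  [/\ forall (a : F) (x y : cycA), G (a *: x + y) = a *: G x + G y,
      bijective G,
      G cyc_one = cyc_one &
      forall x y : cycA, G (cyc_mul x y) = cyc_mul (G x) (G y)].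

Definition is_inner (G : cycA -> cycA) : Prop :=
  exists c cl : cycA, cyc_mul cl c = cyc_one /\
    forall x : cycA, G x = cyc_mul (cyc_mul cl x) c.

End CycAlg.

(* Main.v *)
Require Import Defs.
From HB Require Import structures.
From mathcomp Require Import all_boot all_order all_algebra all_fingroup all_solvable all_field.
From mathcomp Require Import zify ring.
Set Implicit Arguments. Unset Strict Implicit. Unset Printing Implicit Defensive.
Import GRing.Theory.
Local Open Scope ring_scope.

Section Gen.
Variables (F : fieldType) (L : splittingFieldType F) (n : nat).
Variables (sigma : gal_of {:L}) (d : L).
Local Notation m := n.+2.
Local Notation A := (cycA L m).
Local Notation mul := (cyc_mul sigma d).

Definition monn (a : L) (i : nat) : A :=
  [ffun k : 'I_m => if (k == i :> nat) then a else 0].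

Lemma Jlt (i k : 'I_m) : ((if (i <= k)%N then (k - i)%N else (k + m - i)%N) < m)%N.
Proof. have := ltn_ord i; have := ltn_ord k; case: (leqP i k); lia. Qed.

Definition J (i k : 'I_m) : 'I_m := Ordinal (Jlt i k).

Lemma cyc_mulE (g h : A) k : mul g h k =
  \sum_(i < m) g i * (sigma ^+ i)%g (h (J i k)) *
     (if (i <= k)%N then 1 else (sigma ^+ k)%g d).
Proof.
rewrite ffunE -big_split /=; apply: eq_bigr => i _.
have hi := ltn_ord i; have hk := ltn_ord k.
case: (leqP i k) => hik.
- rewrite (big_pred1 (J i k)) ?big_pred0 ?addr0 ?mulr1 //.
    by move=> j /=; apply/negbTE; have := ltn_ord j; lia.
  move=> j; rewrite /= -val_eqE /= hik.
  by apply/idP/idP => /eqP H; apply/eqP; lia.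
- rewrite big_pred0 ?add0r; last first.
    by move=> j /=; apply/negbTE; have := ltn_ord j; lia.
  rewrite (big_pred1 (J i k)) //.
  move=> j; rewrite /= -val_eqE /= leqNgt hik /=.
  by apply/idP/idP => /eqP H; apply/eqP; lia.
Qed.


Lemma embE a : cyc_emb m a = monn a 0.
Proof. by []. Qed.

Lemma oneE : cyc_one L m = monn 1 0.
Proof. by []. Qed.

Lemma emb_mull a (x : A) : mul (monn a 0) x = [ffun k => a * x k].
Proof.
apply/ffunP => k; rewrite cyc_mulE ffunE (bigD1 ord0) //= big1 ?addr0.
  rewrite /monn ffunE /= expg0 gal_id mulr1; congr (_ * x _).
  by apply: val_inj; rewrite /= subn0.
move=> i /negbTE i0; rewrite /monn ffunE.
by rewrite -val_eqE /= in i0; rewrite i0 !mul0r.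
Qed.

Lemma mul_embr (x : A) b : mul x (monn b 0) = [ffun k => x k * (sigma ^+ k)%g b].
Proof.
apply/ffunP => k; rewrite cyc_mulE ffunE (bigD1 k) //= big1 ?addr0.
  rewrite /monn ffunE /= leqnn subnn eqxx mulr1 //.
move=> i ik; rewrite /monn ffunE /=.
have hi := ltn_ord i; have hk := ltn_ord k; move/eqP: ik => ik.
have {}ik : nat_of_ord i <> nat_of_ord k by move=> h; apply: ik; apply: val_inj.
case: (leqP i k) => h1; case: eqP => h2 //=; try lia;
  by rewrite rmorph0 mulr0 mul0r.
Qed.

Lemma mon_mul a b (i j : nat) : (i < m)%N -> (j < m)%N ->
  mul (monn a i) (monn b j) =
  if (i + j < m)%N then monn (a * (sigma ^+ i)%g b) (i + j)
  else monn (a * (sigma ^+ i)%g b * (sigma ^+ (i + j - m))%g d) (i + j - m).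
Proof.
move=> hi hj; apply/ffunP => k; rewrite cyc_mulE (bigD1 (Ordinal hi)) //= big1 ?addr0;
  last first.
  move=> i' /negbTE; rewrite -val_eqE /= /monn ffunE => ->; by rewrite !mul0r.
have hk := ltn_ord k.
rewrite /monn !ffunE /= eqxx.
case: (ltnP (i + j) m) => hij; rewrite ffunE;
case: (leqP i k) => h1; case: eqP => h2; case: eqP => h3; try lia;
  rewrite ?rmorph0 ?mulr0 ?mul0r ?mulr1 //.
by rewrite h3.
Qed.

Lemma monn_sum (x : A) : x = \sum_(i < m) monn (x i) i.
Proof.
apply/ffunP => k; rewrite sum_ffunE (bigD1 k) //= /monn ffunE eqxx big1 ?addr0 //.
by move=> i ik; rewrite /monn ffunE; rewrite eq_sym val_eqE (negbTE ik).
Qed.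


Lemma JP (p : nat) (hp : (p < m)%N) (i k : 'I_m) :
  (J i k == p :> nat) = (i == J (Ordinal hp) k :> nat).
Proof.
have hi := ltn_ord i; have hk := ltn_ord k; rewrite /J /=.
case: (leqP i k) => h1; case: (leqP p k) => h2;
  by apply/idP/idP => /eqP h; apply/eqP; lia.
Qed.

Lemma mul_monr (g : A) b p (hp : (p < m)%N) k :
  mul g (monn b p) k = g (J (Ordinal hp) k) * (sigma ^+ (J (Ordinal hp) k))%g b *
     (if (J (Ordinal hp) k <= k)%N then 1 else (sigma ^+ k)%g d).
Proof.
rewrite cyc_mulE (bigD1 (J (Ordinal hp) k)) //= big1 ?addr0.
  by rewrite /monn ffunE (JP hp) eqxx.
move=> i ik; rewrite /monn ffunE (JP hp).
rewrite val_eqE (negbTE ik).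
by rewrite rmorph0 mulr0 mul0r.
Qed.

Definition nucl (a : A) := forall x y, mul (mul a x) y = mul a (mul x y).

Lemma nucl_emb c : nucl (monn c 0).
Proof.
move=> x y; apply/ffunP => k.
rewrite !emb_mull [RHS]ffunE !cyc_mulE mulr_sumr; apply: eq_bigr => i _.
by rewrite ffunE !mulrA.
Qed.

Lemma monnZ (c : F) a i : monn (c *: a) i = c *: monn a i.
Proof. by apply/ffunP => k; rewrite !ffunE; case: ifP; rewrite ?scaler0. Qed.

Lemma monnD a b i : monn (a + b) i = monn a i + monn b i.
Proof. by apply/ffunP => k; rewrite !ffunE; case: ifP; rewrite ?addr0. Qed.

Lemma monn_emb_mul a b : monn (a * b) 0 = mul (monn a 0) (monn b 0).
Proof.
by apply/ffunP => k; rewrite emb_mull !ffunE; case: ifP; rewrite ?mulr0.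
Qed.

Lemma monn0 k : monn 0 k = 0.
Proof. by apply/ffunP => i; rewrite !ffunE; case: ifP. Qed.

Lemma monn_inj i a b : (i < m)%N -> monn a i = monn b i -> a = b.
Proof.
move=> hi /ffunP /(_ (Ordinal hi)); by rewrite !ffunE /= eqxx.
Qed.

Definition o1 : 'I_m := @Ordinal m 1 isT.

End Gen.

Section Sig.
Variables (F : fieldType) (L : splittingFieldType F) (n : nat).
Variables (sigma : gal_of {:L}) (d : L).
Local Notation m := n.+2.
Local Notation A := (cycA L m).
Local Notation mul := (cyc_mul sigma d).
Hypothesis Hdim : \dim {:L} = m.
Hypothesis Hgal : galois 1%AS {:L}.
Hypothesis Hcyc : 'Gal({:L} / 1%AS)%g = <[sigma]>%g.
Hypothesis Hroot : forall z : F, z ^+ m = 1 -> z = 1.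
Hypothesis Hd : d != 0.
Hypothesis Hgen : forall E : {subfield L}, d \in E -> (E :> {vspace L}) = fullv.

Lemma order_sigma : #[sigma]%g = m.
Proof.
by rewrite orderE -Hcyc -galois_dim // dimv1 divn1 Hdim.
Qed.

Lemma galXD a b x : (sigma ^+ (a + b))%g x = (sigma ^+ b)%g ((sigma ^+ a)%g x).
Proof. by rewrite expgD galM ?memvf. Qed.

Lemma galXm x : (sigma ^+ m)%g x = x.
Proof. by rewrite -order_sigma expg_order gal_id. Qed.

Lemma sigmaX_neq1 i : (0 < i < m)%N -> (sigma ^+ i)%g != 1%g.
Proof.
move=> /andP[i0 im]; rewrite -order_dvdn order_sigma.
by apply/negP => /dvdn_leq => /(_ i0); rewrite leqNgt im.
Qed.

Lemma sigmaX_d i : (0 < i < m)%N -> (sigma ^+ i)%g d != d.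
Proof.
move=> hi; apply/negP => /eqP hd.
have dE : d \in fixedField [set (sigma ^+ i)%g].
  by apply/fixedFieldP; [exact: memvf | move=> x /set1P ->].
have := Hgen dE => /= hE.
move/negP: (sigmaX_neq1 hi); apply; apply/gal_eqP => x _.
have : x \in fixedField [set (sigma ^+ i)%g] by rewrite hE memvf.
by case/mem_fixedFieldP => _ /(_ _ (set11 _)) ->; rewrite gal_id.
Qed.


Local Notation mon := (monn n).

Lemma nucl_emb_inv a : nucl sigma d a -> a = mon (a ord0) 0.
Proof.
move=> Na; apply/ffunP => i; rewrite ffunE.
case: eqP => [i0|i0].
  by rewrite (_ : i = ord0) //; apply: val_inj; rewrite /= i0.
have hi := ltn_ord i.
have ip : (0 < i)%N by lia.
pose p := (m - i)%N; have hp : (p < m)%N by rewrite /p; lia.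
have := congr1 (fun z : A => z i) (Na (mon 1 p) (mon 1 i)).
rewrite /= (mul_monr _ _ _ _ hi) (mon_mul _ _ _ _ hp hi).
rewrite (mul_monr _ _ _ _ hp).
have e1 : J (Ordinal hp) (J (Ordinal hi) i) = i.
  by apply: val_inj; rewrite /= leqnn subnn /=; case: leqP => h; rewrite /p; lia.
have e2 : nat_of_ord (J (Ordinal hi) i) = 0%N by rewrite /= leqnn subnn.
have e3 : (p + i < m)%N = false by rewrite /p; apply/negbTE; lia.
have e4 : (p + i - m = 0)%N by rewrite /p; lia.
have e5 : (nat_of_ord i <= 0)%N = false by lia.
rewrite e1 e2 e3 e4 e5 leq0n /= !rmorph1 expg0 gal_id !mulr1 mul1r.
rewrite mul_embr ffunE => /eqP; rewrite -subr_eq0 -mulrBr mulf_eq0 => /orP[/eqP //|].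
rewrite subr_eq0 eq_sym => /eqP hd.
by have := @sigmaX_d i; rewrite ip hi hd eqxx => /(_ isT).
Qed.



Definition Pk (k : L) i := \prod_(0 <= j < i) (sigma ^+ j)%g k.

Lemma Pk0 k : Pk k 0 = 1.
Proof. by rewrite /Pk big_geq. Qed.

Lemma PkS k i : Pk k i.+1 = k * sigma (Pk k i).
Proof.
rewrite /Pk big_nat_recl // expg0 gal_id rmorph_prod; congr (_ * _).
by apply: eq_bigr => j _; rewrite expgSr galM ?memvf.
Qed.

Lemma PkSr k i : Pk k i.+1 = Pk k i * (sigma ^+ i)%g k.
Proof. by rewrite /Pk big_nat_recr. Qed.

Lemma PkD k a b : Pk k (a + b) = Pk k a * (sigma ^+ a)%g (Pk k b).
Proof.
elim: b => [|b IH]; first by rewrite addn0 Pk0 rmorph1 mulr1.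
by rewrite addnS !PkSr IH rmorphM mulrA addnC galXD.
Qed.

Lemma galNormE a : galNorm 1%AS {:L} a = Pk a m.
Proof.
rewrite /galNorm Hcyc.
have -> : <[sigma]>%g = [set (sigma ^+ (nat_of_ord i))%g | i : 'I_m].
  apply/setP => x; apply/idP/imsetP.
    by case/cyclePmin => i; rewrite order_sigma => hi ->; exists (Ordinal hi).
  by case => i _ ->; exact: mem_cycle.
rewrite big_imset /=; last first.
  by move=> i j _ _ /eqP; rewrite eq_expg_ord ?order_sigma // => /eqP.
by rewrite /Pk big_mkord; apply: eq_bigl.
Qed.

Section GAut.
Variable G : A -> A.
Hypothesis HG : is_FAut sigma d G.

Lemma GD x y : G (x + y) = G x + G y.
Proof. by case: HG => Hl _ _ _; have := Hl 1 x y; rewrite !scale1r. Qed.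
Lemma G0 : G 0 = 0.
Proof. by apply: (addrI (G 0)); rewrite -GD !addr0. Qed.
Lemma GZ (c : F) x : G (c *: x) = c *: G x.
Proof. by case: HG => Hl _ _ _; have := Hl c x 0; rewrite !addr0 G0 addr0. Qed.
Lemma GM x y : G (mul x y) = mul (G x) (G y).
Proof. by case: HG. Qed.
Lemma G1 : G (mon 1 0) = mon 1 0.
Proof. by case: HG. Qed.
Lemma Ginj : injective G.
Proof. by case: HG => _ /bij_inj. Qed.
Lemma Gsum (f : 'I_m -> A) : G (\sum_(i < m) f i) = \sum_(i < m) G (f i).
Proof. exact: (big_morph G GD G0). Qed.

Lemma nucl_G a : nucl sigma d a -> nucl sigma d (G a).
Proof.
case: HG => _ [g Gg gG] _ _ Na x y.
by rewrite -(gG x) -(gG y) -!GM Na.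
Qed.

Definition tau x := G (mon x 0) ord0.

Lemma G_emb x : G (mon x 0) = mon (tau x) 0.
Proof. exact: (nucl_emb_inv (nucl_G (@nucl_emb _ _ _ sigma d x))). Qed.

Lemma tauD x y : tau (x + y) = tau x + tau y.
Proof.
by apply: (@monn_inj _ _ n 0) => //; rewrite monnD -!G_emb -GD -monnD.
Qed.

Lemma tauZ (c : F) x : tau (c *: x) = c *: tau x.
Proof.
by apply: (@monn_inj _ _ n 0) => //; rewrite monnZ -!G_emb -GZ -monnZ.
Qed.

Lemma tauM x y : tau (x * y) = tau x * tau y.
Proof.
apply: (@monn_inj _ _ n 0) => //.
by rewrite (@monn_emb_mul _ _ n sigma d) -!G_emb (@monn_emb_mul _ _ n sigma d) GM !G_emb.
Qed.

Lemma tau1 : tau 1 = 1.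
Proof. by apply: (@monn_inj _ _ n 0) => //; rewrite -G_emb G1. Qed.

Lemma tau_lin : linear_for *:%R tau.
Proof. by move=> c u v; rewrite tauD tauZ. Qed.

HB.instance Definition _ := GRing.isLinear.Build F L L *:%R tau tau_lin.

Lemma tau_gal : exists s, forall x, tau x = (sigma ^+ s)%g x.
Proof.
have hom : kHom 1 fullv (linfun tau).
  apply/kHomP_tmp; split.
    by move=> x /vlineP[c ->]; rewrite !lfunE /= tauZ tau1.
  by move=> x y _ _; rewrite !lfunE /= tauM.
have nL : normalField (1%AS : {vspace L}) {:L} by move: Hgal; rewrite /galois => /and3P[].
have sub : (1%AS <= {:L}%AS <= {:L}%AS)%VS by rewrite subvf subvv.
have [g gG eqg] := kHom_to_gal sub nL hom.
rewrite Hcyc in gG; case/cycleP: gG => s gs.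
exists s => x; have := eqg x (memvf x); rewrite lfunE /= => ->.
by rewrite gs.
Qed.


Local Notation T := (mon 1 1).
Definition kk := G T (o1 n).

Lemma tau_comm x : tau (sigma x) = sigma (tau x).
Proof.
have [s hs] := tau_gal; rewrite !hs -!galM ?memvf //.
by rewrite -expgS -expgSr.
Qed.

Lemma tau_surj b : exists a, tau a = b.
Proof.
have [s hs] := tau_gal; exists (((sigma ^+ s)^-1)%g b).
by rewrite hs -galM ?memvf // mulVg gal_id.
Qed.

Lemma GT : G T = mon kk 1.
Proof.
apply/ffunP => k; rewrite [RHS]ffunE.
case: eqP => [k1|k1].
  by rewrite /kk (_ : k = o1 n) //; apply: val_inj.
apply/eqP/negPn/negP => nz.
have key : forall b, (sigma ^+ k)%g b = sigma b.
  move=> b; have [a <-] := tau_surj b.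
  have e : mul T (mon a 0) = mul (mon (sigma a) 0) T.
    by rewrite !mon_mul //= expg1 expg0 gal_id mul1r mulr1.
  have := congr1 (fun z : A => z k) (congr1 G e).
  rewrite /= !GM !G_emb mul_embr emb_mull !ffunE tau_comm => h.
  by apply: (mulfI nz); rewrite h mulrC.
have : (sigma ^+ k)%g == (sigma ^+ 1)%g.
  by apply/gal_eqP => b _; rewrite key expg1.
rewrite eq_expg_mod_order order_sigma modn_small // modn_small //.
by move/eqP.
Qed.


Lemma GTi i : (i < m)%N -> G (mon 1 i) = mon (Pk kk i) i.
Proof.
elim: i => [_|i IH hi]; first by rewrite Pk0 G1.
have e : mon 1 i.+1 = mul T (mon 1 i).
  by rewrite mon_mul ?(ltnW hi) // add1n hi expg1 rmorph1 mulr1.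
by rewrite e GM GT IH ?(ltnW hi) // mon_mul ?(ltnW hi) // add1n hi PkS.
Qed.

Lemma Gd : tau d = Pk kk m * d.
Proof.
have e : mon d 0 = mul T (mon 1 n.+1).
  by rewrite mon_mul // add1n ltnn subnn expg0 gal_id expg1 rmorph1 !mul1r.
apply: (@monn_inj _ _ n 0) => //.
rewrite -G_emb e GM GT GTi // mon_mul // add1n ltnn subnn expg0 gal_id.
by rewrite -PkS.
Qed.

Lemma kk_neq0 : kk != 0.
Proof.
apply/eqP => k0; have := GT; rewrite k0 monn0 -G0 => /Ginj /ffunP /(_ (o1 n)).
by rewrite !ffunE /=; move/eqP; rewrite oner_eq0.
Qed.

Lemma N_fixed : sigma (Pk kk m) = Pk kk m.
Proof.
have := PkS kk m; rewrite PkSr galXm => h.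
by apply: (mulfI kk_neq0); rewrite -h mulrC.
Qed.

Lemma N_in1 : Pk kk m \in 1%VS.
Proof.
have hfix := elimT galois_fixedField Hgal.
rewrite -hfix; apply/fixedFieldP; first exact: memvf.
move=> x; rewrite Hcyc => /cycleP[i ->].
elim: i => [|i IH]; first by rewrite expg0 gal_id.
by rewrite expgSr galM ?memvf // IH N_fixed.
Qed.

Lemma tau_d_id : tau d = d /\ Pk kk m = 1.
Proof.
have [c hc] : exists c, Pk kk m = c *: 1 by apply/vlineP; exact: N_in1.
have [s hs] := tau_gal.
pose x := (sigma ^+ s)%g.
have iter : forall j, (x ^+ j)%g d = c ^+ j *: d.
  elim => [|j IH]; first by rewrite expg0 gal_id expr0 scale1r.
  rewrite expgSr galM ?memvf // IH linearZ /= /x -hs Gd hc -scalerAl mul1r.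
  by rewrite scalerA -exprSr.
have xm : (x ^+ m)%g = 1%g.
  by rewrite /x -expgM mulnC expgM -order_sigma expg_order expg1n.
have h : (c ^+ m - 1) *: d = 0.
  by rewrite scalerBl scale1r -iter xm gal_id subrr.
move/eqP: h; rewrite scaler_eq0 (negbTE Hd) orbF subr_eq0 => /eqP /Hroot c1.
have N1 : Pk kk m = 1 by rewrite hc c1 scale1r.
by split => //; rewrite Gd N1 mul1r.
Qed.

Lemma tau_id b : tau b = b.
Proof.
have [s hs] := tau_gal.
have hd : (sigma ^+ s)%g d = d by rewrite -hs tau_d_id.1.
have dE : d \in fixedField [set (sigma ^+ s)%g].
  by apply/fixedFieldP; [exact: memvf | move=> y /set1P ->].
have hE := Hgen dE.
have : b \in fixedField [set (sigma ^+ s)%g] by rewrite hE memvf.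
by case/mem_fixedFieldP => _ /(_ _ (set11 _)); rewrite hs.
Qed.

Lemma G_emb_id b : G (mon b 0) = mon b 0.
Proof. by rewrite G_emb tau_id. Qed.

Lemma Pm1 : Pk kk m = 1.
Proof. exact: tau_d_id.2. Qed.

Lemma G_formula y : G y = [ffun i => y i * Pk kk i].
Proof.
rewrite {1}(monn_sum y) Gsum [RHS]monn_sum; apply: eq_bigr => i _.
have e : mon (y i) i = mul (mon (y i) 0) (mon 1 i).
  by rewrite emb_mull; apply/ffunP => k; rewrite !ffunE; case: ifP; rewrite ?mulr1 ?mulr0.
rewrite e GM G_emb_id GTi // emb_mull; apply/ffunP => k; rewrite !ffunE.
by case: ifP; rewrite ?mulr0.
Qed.

End GAut.

Section Build.
Variable k : L.
Hypothesis Nk : Pk k m = 1.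

Lemma k_neq0 : k != 0.
Proof.
apply/eqP => k0; move: Nk; rewrite k0 PkS mul0r => /eqP; by rewrite eq_sym oner_eq0.
Qed.

Lemma Pk_neq0 i : Pk k i != 0.
Proof.
elim: i => [|i IH]; first by rewrite Pk0 oner_neq0.
by rewrite PkSr mulf_neq0 // fmorph_eq0 k_neq0.
Qed.

Definition Gk (y : A) : A := [ffun i => y i * Pk k i].

Lemma Pk_split (i j : 'I_m) : Pk k i * (sigma ^+ i)%g (Pk k (J i j)) = Pk k j.
Proof.
have hi := ltn_ord i; have hj := ltn_ord j.
rewrite -PkD /=; case: (leqP i j) => h.
  by rewrite subnKC.
rewrite (_ : (i + (j + m - i))%N = (m + j)%N); last by lia.
by rewrite PkD Nk mul1r galXm.
Qed.

Lemma Gk_aut : is_FAut sigma d Gk.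
Proof.
split.
- by move=> a x y; apply/ffunP => i; rewrite !ffunE mulrDl scalerAl.
- exists (fun y : A => [ffun i => y i / Pk k i]).
    by move=> y; apply/ffunP => i; rewrite !ffunE mulfK ?Pk_neq0.
  by move=> y; apply/ffunP => i; rewrite !ffunE divfK ?Pk_neq0.
- apply/ffunP => i; rewrite !ffunE; case: eqP => [->|_]; last by rewrite mul0r.
  by rewrite Pk0 mulr1.
- move=> x y; apply/ffunP => j; rewrite ffunE !cyc_mulE mulr_suml.
  apply: eq_bigr => i _; rewrite !ffunE -(Pk_split i j) rmorphM.
  ring.
Qed.

Lemma Gk_phi : Gk (mon 1 1) (o1 n) = k.
Proof. by rewrite !ffunE /= mul1r PkS Pk0 rmorph1 mulr1. Qed.

End Build.

Lemma Pk_tel b i : b != 0 -> Pk (b / sigma b) i = b / (sigma ^+ i)%g b.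
Proof.
move=> b0; elim: i => [|i IH]; first by rewrite Pk0 expg0 gal_id divff.
have e : (sigma ^+ i.+1)%g b = (sigma ^+ i)%g (sigma b).
  by rewrite -add1n galXD expg1.
have e2 : (sigma ^+ i)%g (b / sigma b) = (sigma ^+ i)%g b / (sigma ^+ i)%g (sigma b).
  by rewrite fmorph_div.
rewrite PkSr IH e2 -e mulrA divfK // fmorph_eq0 //.
Qed.

Lemma inner_aut (G : A -> A) : is_FAut sigma d G -> is_inner sigma d G.
Proof.
move=> HG.
have gen : generator 'Gal({:L} / 1%AS)%g sigma by rewrite /generator Hcyc eqxx.
have nk : galNorm 1%AS {:L} (kk G) == 1 by rewrite galNormE Pm1.
have [b [_ b0] hb] := elimT (Hilbert's_theorem_90 gen (memvf (kk G))) nk.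
exists (mon b^-1 0), (mon b 0); split.
  by rewrite -monn_emb_mul divff.
move=> x; rewrite (G_formula HG) emb_mull mul_embr; apply/ffunP => i.
rewrite !ffunE hb Pk_tel // fmorphV.
ring.
Qed.

Lemma main_n :
  [/\ (forall G : A -> A, is_FAut sigma d G -> forall x : L, G (cyc_emb m x) = cyc_emb m x),
      (exists Phi : (A -> A) -> L,
         [/\ forall G : A -> A, is_FAut sigma d G -> galNorm 1%AS {:L} (Phi G) = 1,
             forall G H : A -> A, is_FAut sigma d G -> is_FAut sigma d H ->
               Phi (G \o H) = Phi G * Phi H,
             forall G H : A -> A, is_FAut sigma d G -> is_FAut sigma d H ->
               Phi G = Phi H -> G =1 H &
             forall k : L, galNorm 1%AS {:L} k = 1 ->
               exists G : A -> A, is_FAut sigma d G /\ Phi G = k])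
    & forall G : A -> A, is_FAut sigma d G -> is_inner sigma d G].
Proof.
split.
- move=> G HG x; exact: G_emb_id.
- exists (fun G : A -> A => G (mon 1 1) (o1 n)); split.
  + by move=> G HG; rewrite galNormE; apply: Pm1.
  + move=> G H HG HH /=; rewrite (G_formula HG) !ffunE (GT HH) !ffunE /=.
    by rewrite PkS Pk0 rmorph1 mulr1 mulrC.
  + move=> G H HG HH e x; rewrite (G_formula HG) (G_formula HH).
    by rewrite /kk e.
  + move=> k hk; exists (Gk k); split; [apply: Gk_aut | apply: Gk_phi];
      by rewrite -galNormE.
- move=> G HG; exact: inner_aut.
Qed.

End Sig.

Unset Implicit Arguments.
Set Strict Implicit.

Theorem theorem2p5 (F : fieldType) (L : splittingFieldType F) (m : nat)
    (sigma : gal_of {:L}) (d : L) :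
  (2 <= m)%N ->
  \dim {:L} = m ->
  galois 1%AS {:L} ->
  'Gal({:L} / 1%AS)%g = <[sigma]>%g ->
  (forall z : F, z ^+ m = 1 -> z = 1) ->
  d != 0 ->
  (forall E : {subfield L}, d \in E -> (E :> {vspace L}) = fullv) ->
  [/\ (forall G : cycA L m -> cycA L m, is_FAut sigma d G -> forall x : L, G (cyc_emb m x) = cyc_emb m x),
      (exists Phi : (cycA L m -> cycA L m) -> L,
         [/\ forall G : cycA L m -> cycA L m, is_FAut sigma d G -> galNorm 1%AS {:L} (Phi G) = 1,
             forall G H : cycA L m -> cycA L m, is_FAut sigma d G -> is_FAut sigma d H ->
               Phi (G \o H) = Phi G * Phi H,
             forall G H : cycA L m -> cycA L m, is_FAut sigma d G -> is_FAut sigma d H ->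
               Phi G = Phi H -> G =1 H &
             forall k : L, galNorm 1%AS {:L} k = 1 ->
               exists G : cycA L m -> cycA L m, is_FAut sigma d G /\ Phi G = k])
    & forall G : cycA L m -> cycA L m, is_FAut sigma d G -> is_inner sigma d G].
Proof.
case: m => [|[|n]] // _ Hdim Hgal Hcyc Hroot Hd Hgen.
exact: (main_n Hdim Hgal Hcyc Hroot Hd Hgen).
Qed.
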